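(* Let $X$ be a complex manifold. (a) The set of tame pairs is generic (residual) in $X\times{\operatorname{Aut}}\,X$. (b) For a generic automorphism $f\in{\operatorname{Aut}}\,X$, a generic point of $X$ is tame for $f$.
   Context: ${\operatorname{Aut}}\,X$ is the group of holomorphic automorphisms of $X$ with the compact-open topology (a Polish group). For compact $K\subset X$ let $T_K^+=\{(x,g)\in X\times{\operatorname{Aut}}\,X: g^j(x)\in K\text{ for all } j\geq0\}$ and $T_K^-=\{(x,g)\in X\times{\operatorname{Aut}}\,X: g^j(x)\in K\text{ for all } j\leq0\}$. A pair $(p,f)\in X\times {\operatorname{Aut}}\,X$ is tame (equivalently, $p$ is tame for $f$) if whenever $(p,f)$ lies in the interior of $T_K^+\cup T_K^-$ for some compact $K\subset X$, then $(p,f)$ lies in $\operatorname{int}(T_L^+)\cup\operatorname{int}(T_L^-)$ for some compact $L\subset X$. Generic means residual. *)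

(* Defs.v *)
From HB Require Import structures.
From mathcomp Require Import all_boot all_order all_algebra.
From mathcomp Require Import all_classical all_reals all_analysis.
From mathcomp Require Import Rstruct Rstruct_topology.
Set Implicit Arguments. Unset Strict Implicit. Unset Printing Implicit Defensive.
Import Order.TTheory GRing.Theory Num.Theory.
Import numFieldNormedType.Exports.
Local Open Scope classical_set_scope.
Local Open Scope ring_scope.

(* C^n is identified with R^(n+n) = 'rV[R]_(n+n) : a row vector (x | y)
   stands for the complex vector x + i y.  Multiplication by i is cJ. *)
Definition cJ (R : realType) (n : nat) (v : 'rV[R]_(n + n)) : 'rV[R]_(n + n) :=
  row_mx (- rsubmx v) (lsubmx v).

Definition holo_on (R : realType) (n m : nat) (U : set 'rV[R]_(n + n))
    (h : 'rV[R]_(n + n) -> 'rV[R]_(m + m)) : Prop :=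
  open U /\
  forall z, U z -> differentiable h z /\
    forall v, ('d h z) (cJ v) = cJ (('d h z) v).

Definition is_chart (R : realType) (X : topologicalType) (n : nat)
    (U : set X) (phi : X -> 'rV[R]_(n + n)) : Prop :=
  [/\ open U, {in U &, injective phi}, {within U, continuous phi},
      open (phi @` U) &
      forall V : set X, open V -> V `<=` U -> open (phi @` V)].

Definition holo_atlas (R : realType) (X : topologicalType) (n : nat)
    (A : set (set X * (X -> 'rV[R]_(n + n)))) : Prop :=
  [/\ forall c, A c -> is_chart c.1 c.2,
      forall x : X, exists2 c, A c & c.1 x &
      forall c d, A c -> A d ->
        exists2 h, holo_on (c.2 @` (c.1 `&` d.1)) h &
          forall x, (c.1 `&` d.1) x -> d.2 x = h (c.2 x)].

Record complex_manifold (R : realType) (X : topologicalType) := CManifold {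
  cm_dim : nat;
  cm_atlas : set (set X * (X -> 'rV[R]_(cm_dim + cm_dim)));
  cm_hausdorff : hausdorff_space X;
  cm_second_countable : @second_countable X;
  cm_holo_atlas : holo_atlas cm_atlas }.

Definition holo_map (R : realType) (X : topologicalType)
    (M : complex_manifold R X) (f : X -> X) : Prop :=
  continuous f /\
  forall c d, @cm_atlas _ _ M c -> @cm_atlas _ _ M d ->
    exists2 h, holo_on (c.2 @` (c.1 `&` f @^-1` d.1)) h &
      forall x, (c.1 `&` f @^-1` d.1) x -> d.2 (f x) = h (c.2 x).

Definition is_aut (R : realType) (X : topologicalType)
    (M : complex_manifold R X) (f : X -> X) : Prop :=
  holo_map M f /\ exists2 g, holo_map M g & cancel f g /\ cancel g f.

Definition AutSet (R : realType) (X : topologicalType) (M : complex_manifold R X)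
  : set {compact-open, X -> X} := [set f | is_aut M f].

Definition rel_interior (T : topologicalType) (S A : set T) : set T :=
  [set p | S p /\ exists2 O : set T, open O /\ O p & O `&` S `<=` A].

Definition rel_open_dense (T : topologicalType) (S D : set T) : Prop :=
  (exists2 O : set T, open O & D = O `&` S) /\
  (forall O : set T, open O -> O `&` S !=set0 -> O `&` D !=set0).

Definition residual_in (T : topologicalType) (S A : set T) : Prop :=
  A `<=` S /\
  exists D : nat -> set T, (forall k, rel_open_dense S (D k)) /\
    \bigcap_k D k `<=` A.

Section Tame.
Variables (R : realType) (X : topologicalType) (M : complex_manifold R X).

Definition XAut : Type := (X * {compact-open, X -> X})%type.

Definition XAutSet : set XAut := [set p | AutSet M p.2].

Definition Tplus (K : set X) : set XAut :=
  [set p | XAutSet p /\ forall j : nat, K (iter j p.2 p.1)].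

(* g^j(x) in K for all j <= 0, i.e. every y with g^k(y) = x (k >= 0) is in K *)
Definition Tminus (K : set X) : set XAut :=
  [set p | XAutSet p /\ forall (k : nat) (y : X), iter k p.2 y = p.1 -> K y].

Definition tame (p : X) (f : X -> X) : Prop :=
  forall K : set X, compact K ->
    rel_interior XAutSet (Tplus K `|` Tminus K) (p, f) ->
    exists2 L : set X, compact L &
      (rel_interior XAutSet (Tplus L) (p, f) \/
       rel_interior XAutSet (Tminus L) (p, f)).

End Tame.

(* Main.v *)
Require Import Defs.
From HB Require Import structures.
From mathcomp Require Import all_boot all_order all_algebra.
From mathcomp Require Import all_classical all_reals all_analysis.
From mathcomp Require Import Rstruct Rstruct_topology.
Set Implicit Arguments. Unset Strict Implicit. Unset Printing Implicit Defensive.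
Import Order.TTheory GRing.Theory Num.Theory.
Import numFieldNormedType.Exports.
Local Open Scope classical_set_scope.
Local Open Scope ring_scope.

Lemma closed_ball_cpt (R : realType) k (y : 'rV[R]_k) (r : R) :
  0 < r -> compact (closed_ball y r).
Proof.
move=> r0; apply: bounded_closed_compact; last exact: closed_ball_closed.
rewrite closed_ballE //.
exists (`|y| + r); split; first by rewrite realE; apply/orP; left; rewrite addr_ge0 // ltW.
move=> M HM z /= Hz.
apply: le_trans (ltW HM).
have ->: z = (z - y) + y by rewrite subrK.
apply: (le_trans (ler_normD _ _)).
by rewrite addrC lerD2l distrC.
Qed.

Lemma lc_in (X : topologicalType) (M : complex_manifold Rdefinitions.R X)
  (x : X) (U : set X) : open U -> U x ->
  exists C : set X, [/\ compact C, nbhs x C & C `<=` U].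
Proof.
move=> oU Ux.
have [ch cov _] := cm_holo_atlas M.
have [[V phi] /= Ac Vx] := cov x.
have [oV injphi ctphi _ ophi] := ch _ Ac; rewrite /= in oV injphi ctphi ophi.
set V1 := U `&` V.
have oV1 : open V1 by exact: openI.
have V1x : V1 x by [].
have : nbhs (phi x) (phi @` V1).
  apply: open_nbhs_nbhs; split; first by apply: ophi => //; exact: subIsetr.
  by exists x.
move=> /nbhs_closedballP [r Hr].
pose C := V1 `&` phi @^-1` closed_ball (phi x) r%:num.
exists C; split.
- move=> F PF FC.
  have PG : ProperFilter (phi @ F) by exact: fmap_proper_filter.
  have r0 : 0 < r%:num by [].
  have := @closed_ball_cpt _ _ (phi x) r%:num r0 (phi @ F) PG.
  have Gb : (phi @ F) (closed_ball (phi x) r%:num).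
    by apply: (@filterS _ F _ C) => // z [].
  move=> /(_ Gb) [w [bw clw]].
  have [z V1z zw] := Hr _ bw.
  exists z; split; first by split => //; rewrite /= zw.
  move=> A N FA Nz.
  have [N0 [oN0 N0z] N0N] : exists2 N0, open_nbhs z N0 & N0 `<=` N.
    by move: Nz; rewrite nbhsE => -[N0 ? ?]; exists N0.
  have oN1 : open (phi @` (N0 `&` V1)).
    apply: ophi; [exact: openI | by move=> t [_ []]].
  have Fac : (phi @ F) (phi @` (A `&` C)).
    by apply: (@filterS _ F _ (A `&` C)); [move=> t At; exists t | exact: filterI].
  have Nw : nbhs w (phi @` (N0 `&` V1)).
    by apply: open_nbhs_nbhs; split => //; exists z => //.
  have [_ [[a [Aa Ca] <-] [n [N0n V1n] na]]] := clw _ _ Fac Nw.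
  have an : a = n.
    by apply: injphi => //; rewrite inE; [case: Ca => -[] | case: V1n].
  by exists a; split => //; apply: N0N; rewrite an.
- have ctx : {for x, continuous phi}.
    by move: ctphi; rewrite continuous_open_subspace // => /(_ x); apply; rewrite inE; case: V1x.
  have : nbhs x (phi @^-1` ball (phi x) r%:num).
    apply: ctx; exact: nbhsx_ballx.
  move=> Hb; apply: filterS (filterI (open_nbhs_nbhs (conj oV1 V1x)) Hb).
  move=> t [V1t bt]; split => //=.
  exact: subset_closure.
- by move=> t [[]].
Qed.

Definition lc_prop (X : topologicalType) := forall (x : X) (U : set X), open U -> U x ->
  exists C : set X, [/\ compact C, nbhs x C & C `<=` U].

Lemma ev_cont (X : topologicalType) (lc : lc_prop X)
  (g : {compact-open, X -> X}) (z : X) : continuous (g : X -> X) ->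
  {for (z, g), continuous (fun q : X * {compact-open, X -> X} => q.2 q.1)}.
Proof.
move=> cg B /=; rewrite nbhsE => -[Op [oOp Opgz] OpB].
have oP : open ((g : X -> X) @^-1` Op) by move: cg => /continuousP; apply.
have [C [cC nC CP]] := lc z _ oP Opgz.
pose S := [set h : {compact-open, X -> X} | h @` C `<=` Op].
have oS : open S by exact: compact_open_open.
have Sg : S g by move=> _ [t Ct <-]; exact: CP.
exists (C, S); first by split => //=; exact: open_nbhs_nbhs.
by case=> a h /= [Ca Sh]; apply: OpB; apply: Sh; exists a.
Qed.

Lemma iter_cont (X : topologicalType) (lc : lc_prop X)
  (g : {compact-open, X -> X}) (x : X) : continuous (g : X -> X) -> forall j,
  {for (x, g), continuous (fun q : X * {compact-open, X -> X} => iter j q.2 q.1)}.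
Proof.
move=> cg; elim=> [|j IH] /=; first exact: cvg_fst.
pose F := fun q : X * {compact-open, X -> X} => (iter j q.2 q.1, q.2).
have cF : {for (x, g), continuous F}.
  exact: (cvg_pair IH cvg_snd).
have := @continuous_comp _ _ _ F (fun q : X * {compact-open, X -> X} => q.2 q.1) (x, g) cF (ev_cont lc cg).
by [].
Qed.

Lemma aut_cont (X : topologicalType) (M : complex_manifold Rdefinitions.R X)
  (f : X -> X) : AutSet M f -> continuous f.
Proof. by case=> -[]. Qed.

Lemma Tplus_relclosed (X : topologicalType) (M : complex_manifold Rdefinitions.R X)
  (lc : lc_prop X) (K : set X) : compact K -> forall q : XAut X,
  XAutSet M q -> ~ Tplus M K q ->
  exists O : set (XAut X), [/\ open O, O q & forall q', O q' -> ~ Tplus M K q'].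
Proof.
move=> cK [x g] Aq nT.
have [j nK] : exists j, ~ K (iter j g x).
  apply/existsNP => H; apply: nT; split => //.
have cg : continuous (g : X -> X) by exact: (aut_cont Aq).
have clK : closed K by apply: compact_closed => //; exact: cm_hausdorff M.
have : nbhs (x, g) ((fun q : XAut X => iter j q.2 q.1) @^-1` (~` K)).
  have := @iter_cont X lc g x cg j; apply; apply: open_nbhs_nbhs; split => //.
  by rewrite openC.
rewrite nbhsE => -[W0 [oW0 W0q] W0K]; exists W0; split => //.
by move=> q' /W0K nK' [_ /(_ j)].
Qed.

Lemma enum_basis (X : topologicalType) : @second_countable X ->
  exists e : nat -> set X, (forall m, open (e m)) /\
    (forall x N, nbhs x N -> exists m, e m x /\ e m `<=` N).
Proof.
move=> [B cB [Bo Bcv]].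
have [f finj] := countable_injP _ cB.
exists (fun m => [set x | exists2 V, B V /\ f V = m & V x]); split.
- move=> m; rewrite openE => x [V [BV fV] Vx].
  have : nbhs x V by apply: open_nbhs_nbhs; split => //; exact: Bo.
  by apply: filterS => t Vt; exists V.
- move=> x N Nx.
  have [V [BV Vx] VN] := Bcv x N Nx.
  exists (f V); split; first by exists V.
  move=> t [V' [BV' fV'] V't]; apply: VN.
  have -> : V = V' by apply: finj; rewrite ?inE //.
  by [].
Qed.

Definition Kseq (X : topologicalType) (e : nat -> set X) (s : seq nat) : set X :=
  foldr (fun m A => (if `[< compact (closure (e m)) >] then closure (e m) else set0) `|` A) set0 s.

Lemma Kseq_compact (X : topologicalType) (e : nat -> set X) s : compact (Kseq e s).
Proof.
elim: s => [|m s IH] /=; first exact: compact0.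
apply: compactU => //; case: asboolP => // _; exact: compact0.
Qed.

Lemma Kseq_mem (X : topologicalType) (e : nat -> set X) s m :
  m \in s -> compact (closure (e m)) -> closure (e m) `<=` Kseq e s.
Proof.
elim: s => [//|a s IH] /=; rewrite in_cons => /orP[/eqP <-|ms] cm.
  by case: asboolP => // _ t ?; left.
by move=> t /(IH ms cm); right.
Qed.

Lemma Kseq_cover (X : topologicalType) (e : nat -> set X) :
  (forall m, open (e m)) ->
  (forall x N, nbhs x N -> exists m, e m x /\ e m `<=` N) ->
  lc_prop X -> hausdorff_space X ->
  forall K, compact K -> exists s, K `<=` Kseq e s.
Proof.
move=> eo eb lc hX K cK.
pose F := filter_from [set: seq nat] (fun t => [set s : seq nat | {subset t <= s}]).
have FF : Filter F.
  apply: filter_from_filter; first by exists [::].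
  move=> t1 t2 _ _; exists (t1 ++ t2) => //.
  by move=> s H; split => m mt; apply: H; rewrite mem_cat mt ?orbT.
have := (compact_near_coveringP K).1 cK _ F (fun s x => Kseq e s x) FF.
case.
- move=> x Kx.
  have [C [cC nC _]] := lc x setT openT I.
  have [m [emx emC]] := eb x C nC.
  have clC : closed C by exact: compact_closed hX cC.
  have cm : compact (closure (e m)).
    apply: (subclosed_compact _ cC); first exact: closed_closure.
    rewrite (closure_id C).1 //.
    exact: closure_subset.
  exists (e m, [set s : seq nat | {subset [:: m] <= s}]).
    split => //=; first by apply: open_nbhs_nbhs; split.
    by exists [:: m].
  case=> x' s /= [emx' ms].
  apply: (Kseq_mem (ms m _) cm); first by rewrite inE.
  exact: subset_closure.
- move=> t _ Ht; exists t; apply: Ht => //.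
Qed.

Definition Wgood (X : topologicalType) (M : complex_manifold Rdefinitions.R X)
  (L : set X) (O : set (XAut X)) :=
  (forall q, O q -> XAutSet M q -> Tplus M L q) \/
  (forall q, O q -> XAutSet M q -> ~ Tplus M L q).

Definition Wo (X : topologicalType) (M : complex_manifold Rdefinitions.R X)
  (L : set X) : set (XAut X) :=
  [set q | exists O : set (XAut X), [/\ open O, O q & Wgood M L O]].

Lemma Wo_open (X : topologicalType) (M : complex_manifold Rdefinitions.R X)
  (L : set X) : open (Wo M L).
Proof.
rewrite openE => q [W0 [oW0 W0q g]].
have : nbhs q W0 by apply: open_nbhs_nbhs.
by apply: filterS => q' W0q'; exists W0.
Qed.

Lemma W_rod (X : topologicalType) (M : complex_manifold Rdefinitions.R X)
  (L : set X) :
  (forall q : XAut X, XAutSet M q -> ~ Tplus M L q ->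
    exists O : set (XAut X), [/\ open O, O q & forall q', O q' -> ~ Tplus M L q']) ->
  rel_open_dense (XAutSet M) (Wo M L `&` XAutSet M).
Proof.
move=> rc; split; first by exists (Wo M L) => //; exact: Wo_open.
move=> W0 oW0 [q0 [W0q0 Aq0]].
have [H|H] := pselect (forall q, W0 q -> XAutSet M q -> Tplus M L q).
  exists q0; split => //; split => //; exists W0; split => //; by left.
have [q /not_implyP [W0q /not_implyP [Aq nT]]] := (existsNP _).2 H.
have [W1 [oW1 W1q HW1]] := rc q Aq nT.
exists q; split => //; split => //; exists W1; split => //.
by right => q' /HW1.
Qed.

Lemma Tplus_mono (X : topologicalType) (M : complex_manifold Rdefinitions.R X)
  (K L : set X) q : K `<=` L -> Tplus M K q -> Tplus M L q.
Proof. by move=> KL [A H]; split => // j; apply: KL. Qed.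

Lemma tame_W (X : topologicalType) (M : complex_manifold Rdefinitions.R X)
  (Kf : nat -> set X) : (forall n, compact (Kf n)) ->
  (forall K, compact K -> exists n, K `<=` Kf n) ->
  forall (p : X) (f : {compact-open, X -> X}), XAutSet M (p, f) ->
  (forall n, Wo M (Kf n) (p, f)) -> tame M p f.
Proof.
move=> cKf cov p f Apf HW K cK [_ [W0 [oW0 W0q] W0s]].
have [n Kn] := cov K cK.
have [W1 [oW1 W1q [g|g]]] := HW n.
  exists (Kf n) => //; left; split => //; exists W1 => //.
  by move=> q [W1q' Aq]; apply: g.
exists K => //; right; split => //; exists (W0 `&` W1).
  by split => //; exact: openI.
move=> q [[W0q' W1q'] Aq].
have [] := W0s q (conj W0q' Aq) => // Tq.
by exfalso; apply: (g q W1q' Aq); exact: Tplus_mono Tq.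
Qed.

Local Close Scope ring_scope.
Unset Implicit Arguments.

Theorem mainTheorem2 (X : topologicalType)
    (M : complex_manifold Rdefinitions.R X) :
  residual_in (XAutSet M) [set q : XAut X | XAutSet M q /\ tame M q.1 q.2] /\
  exists2 G : set {compact-open, X -> X},
    residual_in (AutSet M) G &
    forall f, G f -> residual_in [set: X] [set p | tame M p f].
Proof.
have hX := cm_hausdorff M.
have lc : lc_prop X := fun x U oU Ux => lc_in M oU Ux.
have [e [eo eb]] := enum_basis (cm_second_countable M).
pose Kf (n : nat) : set X :=
  match (unpickle n : option (seq nat)) with Some s => Kseq e s | None => set0 end.
have cKf : forall n, compact (Kf n).
  by move=> n; rewrite /Kf; case: (unpickle n) => [s|]; [exact: Kseq_compact | exact: compact0].
have cov : forall K, compact K -> exists n, K `<=` Kf n.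
  move=> K cK; have [s Ks] := Kseq_cover eo eb lc hX cK.
  by exists (pickle s); rewrite /Kf pickleK.
pose D n := Wo M (Kf n) `&` XAutSet M.
have rodD : forall n, rel_open_dense (XAutSet M) (D n).
  move=> n; apply: W_rod => q Aq nT.
  exact: (Tplus_relclosed lc (cKf n) Aq nT).
split.
  split; first by move=> q [].
  exists D; split => // -[p f] Hq.
  have Apf : XAutSet M (p, f) by case: (Hq 0%N I).
  split => //=; apply: (tame_W cKf cov Apf) => n.
  by case: (Hq n I).
pose Op n m := [set f : {compact-open, X -> X} | AutSet M f /\
  ((forall p, ~ e m p) \/ exists p, e m p /\ Wo M (Kf n) (p, f))].
have rodO : forall n m, rel_open_dense (AutSet M) (Op n m).
  move=> n m; split.
    have [H|H] := pselect (forall p, ~ e m p).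
      exists setT; first exact: openT.
      by apply/seteqP; split => f; [case=> Af _ | case=> _ Af]; split => //; left.
    exists [set f : {compact-open, X -> X} | exists p, e m p /\ Wo M (Kf n) (p, f)].
      rewrite openE => f [p [emp Wp]].
      have : nbhs (p, f) (Wo M (Kf n)) by apply: open_nbhs_nbhs; split => //; exact: Wo_open.
      case=> -[A B] /= [nA nB] AB.
      apply: filterS nB => f' Bf'; exists p; split => //.
      by apply: (AB (p, f')); split => //; exact: nbhs_singleton.
    apply/seteqP; split => f [Af Hf]; split => //.
      by case: Hf => // /H.
    by right.
  move=> U oU [f0 [Uf0 Af0]].
  have [H|H] := pselect (forall p, ~ e m p).
    by exists f0; split => //; split => //; left.
  have [p0 emp0] : exists p, e m p.
    by apply: contra_notP H => H' p Hp; apply: H'; exists p.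
  pose Q := [set q : XAut X | e m q.1 /\ U q.2].
  have oQ : open Q.
    rewrite openE => -[a b] [ema Ub].
    exists (e m, U) => //=; split; apply: open_nbhs_nbhs; split => //.
  have [[p f] [[Qp Qf] [Wq Aq]]] := (rodD n).2 Q oQ (ex_intro _ (p0, f0) (conj (conj emp0 Uf0) Af0)).
  exists f; split => //; split => //; right; exists p; split => //.
pose Dd (k : nat) := match (unpickle k : option (nat * nat)) with
  Some nm => Op nm.1 nm.2 | None => AutSet M end.
have rodDd : forall k, rel_open_dense (AutSet M) (Dd k).
  move=> k; rewrite /Dd; case: (unpickle k) => [[n m]|]; first exact: rodO.
  split; first by exists setT; [exact: openT | rewrite setTI].
  by [].
exists (\bigcap_k Dd k).
  split; last by exists Dd; split.
  move=> f /(_ 0%N I); rewrite /Dd; case: (unpickle 0%N) => [[n m] []|] //.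
move=> f Hf.
have HO : forall n m, Op n m f.
  by move=> n m; have := Hf (pickle (n, m)) I; rewrite /Dd pickleK.
have Af : AutSet M f by case: (HO 0%N 0%N).
split => //.
exists (fun n => [set p | Wo M (Kf n) (p, f)]); split.
  move=> n; split.
    exists [set p | Wo M (Kf n) (p, f)]; last by rewrite setIT.
    rewrite openE => p Wp.
    have : nbhs (p, f) (Wo M (Kf n)) by apply: open_nbhs_nbhs; split => //; exact: Wo_open.
    case=> -[A B] /= [nA nB] AB.
    apply: filterS nA => p' Ap'.
    by apply: (AB (p', f)); split => //; exact: nbhs_singleton.
  move=> U oU [x [Ux _]].
  have [m [emx emU]] := eb x U (open_nbhs_nbhs (conj oU Ux)).
  have [_ [H|[p [emp Wp]]]] := HO n m; first by exfalso; exact: H emx.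
  by exists p; split => //; apply: emU.
move=> p Hp; apply: (tame_W cKf cov) => // n.
exact: Hp n I.
Qed.
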